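(* Let $f_i$ and $f_j$ be two finite set (random finite set) densities on the finite subsets of $\mathbb{R}^d$, with cardinality probability mass functions $p_i,p_j$ on $\{0,1,2,\ldots\}$ and localisation densities $\rho_{i,n},\rho_{j,n}$ ($n\ge 1$), and let $\omega\in[0,1]$. Let $z_\omega(n)$, $N_\omega$ and the fused cardinality pmf $p_\omega$ be as defined in the context. Fix a cardinality $n$. Then the inconsistency condition $$p_\omega(n)<\min\{p_i(n),p_j(n)\}$$ holds if $$z_\omega(n)<\frac{\sum_{n'\neq n} p_i^{(1-\omega)}(n')\,p_j^{\omega}(n')\,z_\omega(n')}{\dfrac{p_i^{(1-\omega)}(n)\,p_j^{\omega}(n)}{\min\{p_i(n),p_j(n)\}}-p_i^{(1-\omega)}(n)\,p_j^{\omega}(n)},$$ where the right-hand side is assumed to be well defined (i.e. $\min\{p_i(n),p_j(n)\}>0$ and the denominator is nonzero).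
   Context: A finite set density $f$ on finite subsets $X=\{x_1,\ldots,x_n\}\subset\mathbb{R}^d$ is written $f(X)=p(|X|)\,n!\,\rho_n(x_1,\ldots,x_n)$, where $p$ is a probability mass function on $\{0,1,2,\ldots\}$ (the cardinality distribution) and, for each $n\ge1$, $\rho_n$ is a probability density on $(\mathbb{R}^d)^n$ symmetric in its arguments (the localisation density). For $f_i=(p_i,\{\rho_{i,n}\})$, $f_j=(p_j,\{\rho_{j,n}\})$ and $\omega\in[0,1]$, define $z_\omega(0)=1$ and for $n\ge1$ $$z_\omega(n)=\int_{(\mathbb{R}^d)^n}\rho_{i,n}^{(1-\omega)}(x_1,\ldots,x_n)\,\rho_{j,n}^{\omega}(x_1,\ldots,x_n)\,\mathrm{d}x_1\cdots\mathrm{d}x_n,$$ $$N_\omega=\sum_{n'=0}^\infty p_i^{(1-\omega)}(n')\,p_j^{\omega}(n')\,z_\omega(n'),\qquad p_\omega(n)=\frac{1}{N_\omega}p_i^{(1-\omega)}(n)\,p_j^{\omega}(n)\,z_\omega(n).$$ $p_\omega$ is the cardinality distribution of the exponential mixture density (normalised weighted geometric mean) $f_\omega\propto f_i^{1-\omega}f_j^{\omega}$, normalised with respect to the set integral. *)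

(* Defs.v *)
From HB Require Import structures.
From mathcomp Require Import all_boot all_order all_algebra all_fingroup.
From mathcomp Require Import all_classical all_reals all_analysis.
Set Implicit Arguments. Unset Strict Implicit. Unset Printing Implicit Defensive.
Import Order.TTheory GRing.Theory Num.Theory.
Local Open Scope ring_scope.
Local Open Scope ereal_scope.

Fixpoint iint (R : realType) (T : Type) (I : (T -> \bar R) -> \bar R) (k : nat)
  : (k.-tuple T -> \bar R) -> \bar R :=
  match k return (k.-tuple T -> \bar R) -> \bar R with
  | 0 => fun F => F [tuple]
  | k'.+1 => fun F => I (fun x => iint I (fun t : k'.-tuple T => F [tuple of x :: t]))
  end.

Definition leb_int (R : realType) (f : R -> \bar R) : \bar R :=
  \int[@lebesgue_measure R]_x f x.

(* Lebesgue integral on R^d, points of R^d being d-tuples of reals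
   (by Tonelli, for nonnegative measurable integrands this iterated integral
   is the integral w.r.t. d-dimensional Lebesgue measure). *)
Definition intRd (R : realType) (d : nat) (g : d.-tuple R -> \bar R) : \bar R :=
  iint (@leb_int R) g.

Definition intRdn (R : realType) (d n : nat)
  (F : n.-tuple (d.-tuple R) -> \bar R) : \bar R :=
  iint (@intRd R d) F.

Definition is_pmf (R : realType) (p : nat -> R) : Prop :=
  (forall n, 0 <= p n)%R /\ \sum_(0 <= n <oo) (p n)%:E = 1.

Definition is_loc_density (R : realType) (d n : nat)
  (rho : n.-tuple (d.-tuple R) -> R) : Prop :=
  measurable_fun setT rho /\
  (forall x, 0 <= rho x)%R /\
  intRdn (fun x => (rho x)%:E) = 1 /\
  (forall (s : 'S_n) (x : n.-tuple (d.-tuple R)),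
      rho [tuple tnth x (s i) | i < n] = rho x).

Definition z_omega (R : realType) (d : nat)
  (rho_i rho_j : forall n, n.-tuple (d.-tuple R) -> R) (w : R) (n : nat) : \bar R :=
  if n is 0 then 1
  else intRdn (fun x => ((rho_i n x) `^ (1 - w) * (rho_j n x) `^ w)%:E).

Definition cw (R : realType) (p_i p_j : nat -> R) (w : R) (n : nat) : R :=
  (p_i n `^ (1 - w) * p_j n `^ w)%R.

Definition N_omega (R : realType) (d : nat) (p_i p_j : nat -> R)
  (rho_i rho_j : forall n, n.-tuple (d.-tuple R) -> R) (w : R) : \bar R :=
  \sum_(0 <= n' <oo) ((cw p_i p_j w n')%:E * z_omega rho_i rho_j w n').

Definition p_omega (R : realType) (d : nat) (p_i p_j : nat -> R)
  (rho_i rho_j : forall n, n.-tuple (d.-tuple R) -> R) (w : R) (n : nat) : \bar R :=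
  ((cw p_i p_j w n)%:E * z_omega rho_i rho_j w n) / N_omega p_i p_j rho_i rho_j w.

(* Main.v *)
Require Import Defs.
From HB Require Import structures.
From mathcomp Require Import all_boot all_order all_algebra all_fingroup.
From mathcomp Require Import all_classical all_reals all_analysis.
From mathcomp Require Import ring lra.
Import Order.TTheory GRing.Theory Num.Theory.
Local Open Scope ring_scope.
Local Open Scope ereal_scope.

Lemma iint_ge0 (R : realType) (T : Type) (I : (T -> \bar R) -> \bar R)
  (HI : forall f, (forall x, 0 <= f x) -> 0 <= I f) (k : nat) :
  forall F : k.-tuple T -> \bar R, (forall t, 0 <= F t) -> 0 <= iint I F.
Proof.
elim: k => [|k IH] F HF /=; first exact: HF.
apply: HI => x; apply: IH => t; exact: HF.
Qed.

Lemma leb_int_ge0 (R : realType) (f : R -> \bar R) : (forall x, 0 <= f x) -> 0 <= leb_int f.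
Proof. move=> hf; rewrite /leb_int; apply: integral_ge0 => x _; exact: hf. Qed.

Lemma intRdn_ge0 (R : realType) d n (F : n.-tuple (d.-tuple R) -> \bar R) :
  (forall t, 0 <= F t) -> 0 <= intRdn F.
Proof.
apply: iint_ge0 => f hf; rewrite /intRd; apply: iint_ge0 => //; exact: leb_int_ge0.
Qed.

Lemma z_ge0 (R : realType) d rho_i rho_j (w : R) k : 0 <= @z_omega R d rho_i rho_j w k.
Proof.
case: k => [|k] /=; first exact: lee01.
apply: intRdn_ge0 => t; rewrite lee_fin; apply: mulr_ge0; exact: powR_ge0.
Qed.

Lemma cw_ge0 (R : realType) p_i p_j (w : R) k : (0 <= cw p_i p_j w k)%R.
Proof. apply: mulr_ge0; exact: powR_ge0. Qed.

Lemma pmf_le1 (R : realType) (p : nat -> R) k : is_pmf p -> (p k <= 1)%R.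
Proof.
move=> [h0 h1]; rewrite -lee_fin -h1 (@nneseriesD1 _ _ k xpredT) //=.
  rewrite leeDl //; apply: nneseries_ge0 => *; rewrite lee_fin; exact: h0.
by move=> *; rewrite lee_fin.
Qed.

Theorem proposition1 (R : realType) (d : nat)
  (p_i p_j : nat -> R)
  (rho_i rho_j : forall n : nat, n.-tuple (d.-tuple R) -> R)
  (w : R) (n : nat) :
  is_pmf p_i -> is_pmf p_j ->
  (forall m, (0 < m)%N -> is_loc_density (rho_i m)) ->
  (forall m, (0 < m)%N -> is_loc_density (rho_j m)) ->
  (0 <= w <= 1)%R ->
  (0 < Num.min (p_i n) (p_j n))%R ->
  (cw p_i p_j w n / Num.min (p_i n) (p_j n) - cw p_i p_j w n != 0)%R ->
  z_omega rho_i rho_j w n <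
    (\sum_(0 <= n' <oo | n' != n)
        ((cw p_i p_j w n')%:E * z_omega rho_i rho_j w n'))
    * ((cw p_i p_j w n / Num.min (p_i n) (p_j n) - cw p_i p_j w n)^-1)%:E ->
  p_omega p_i p_j rho_i rho_j w n < (Num.min (p_i n) (p_j n))%:E.
Proof.
move=> pi pj _ _ _ m0 D0 hz.
have hm1 : (Num.min (p_i n) (p_j n) <= 1)%R.
  by rewrite ge_min (@pmf_le1 _ _ n pi).
rewrite /p_omega /N_omega (@nneseriesD1 _ _ n xpredT) //=; last first.
  by move=> k _; apply: mule_ge0; [rewrite lee_fin; exact: cw_ge0| exact: z_ge0].
move: hz D0 m0 hm1.
set S := \sum_(0 <= k <oo | k != n) _.
have S0 : 0 <= S by apply: nneseries_ge0 => k _ _; apply: mule_ge0;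
  [rewrite lee_fin; exact: cw_ge0| exact: z_ge0].
have := @z_ge0 _ _ rho_i rho_j w n.
have := @cw_ge0 _ p_i p_j w n.
set c := cw p_i p_j w n; set z := z_omega rho_i rho_j w n;
set m := Num.min (p_i n) (p_j n).
move: S0; case: S => [s| |] //; case: z => [zr| |] //.
- rewrite !lee_fin => s0 c0 z0 hz D0 m0 m1.
  have c0' : c != 0%R by apply: contraNneq D0 => ->; rewrite mul0r subrr.
  have cp : (0 < c)%R by rewrite lt0r c0' c0.
  have mn1 : m != 1%R by apply: contraNneq D0 => ->; rewrite divr1 subrr.
  have mlt1 : (m < 1)%R by rewrite lt_neqAle mn1 m1.
  have DE : (c / m - c = c * (1 - m) / m)%R by field; rewrite gt_eqF.
  have Dp : (0 < c / m - c)%R.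
    by rewrite DE divr_gt0 // mulr_gt0 // subr_gt0.
  rewrite -EFinM lte_fin ltr_pdivlMr // in hz.
  have hzm : (zr * c * (1 - m) < s * m)%R.
    by move: hz; rewrite DE !mulrA ltr_pdivrMr.
  have sp : (0 < c * zr + s)%R.
    have sp0 : (0 < s)%R by apply: le_lt_trans hz; apply: mulr_ge0 => //; exact: ltW.
    have := mulr_ge0 c0 z0; lra.
  change ((c * zr)%:E * ((c * zr + s)%:E)^-1 < m%:E).
  rewrite inver gt_eqF // -EFinM lte_fin ltr_pdivrMr //.
  nra.
- move=> _ c0 z0 _ _ m0 _.
  change (c%:E * zr%:E * 0 < m%:E).
  by rewrite mule0 lte_fin.
- by move=> _ _ _; rewrite ltNge leey.
Qed.
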